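(* Let $\Phi=(A;\{E_i\}_{i=0}^d;A^*;\{E^*_i\}_{i=0}^d)$ be a tridiagonal system on $V$ with $d\ge1$, such that $(A,A^* )$ satisfies the $q$-Serre relations, with $E_iV$ the eigenspace of $A$ for $\theta_i=q^{2i-d}$ and $E^*_iV$ the eigenspace of $A^*$ for $\theta^*_i=q^{d-2i}$. Let $\{U_i\}_{i=0}^d$ be its split decomposition and $K:V\to V$ the linear map acting on $U_i$ as $q^{d-2i}I$. Then $$\frac{qKA-q^{-1}AK}{q-q^{-1}}=I,\qquad \frac{qK^{-1}A^*-q^{-1}A^*K^{-1}}{q-q^{-1}}=I.$$
   Context: $\mathcal K$ is an algebraically closed field; $V$ is a nonzero finite-dimensional vector space over $\mathcal K$; $q\in\mathcal K$ is nonzero and not a root of unity; $[3]_q=q^2+1+q^{-2}$. The $q$-Serre relations for $(X,Y)$: $X^3Y-[3]_qX^2YX+[3]_qXYX^2-YX^3=0$ and $Y^3X-[3]_qY^2XY+[3]_qYXY^2-XY^3=0$. Primitive idempotent of a diagonalizable $X$ for eigenvalue $\lambda_i$: $\prod_{j\ne i}\frac{X-\lambda_jI}{\lambda_i-\lambda_j}$. A tridiagonal system on $V$ is a sequence $(A;\{E_i\}_{i=0}^d;A^*;\{E^*_i\}_{i=0}^d)$ with $A,A^*$ diagonalizable, $\{E_i\}$, $\{E^*_i\}$ orderings of their primitive idempotents, $E_iA^*E_j=0$ and $E^*_iAE^*_j=0$ when $|i-j|>1$, and no subspaces other than $0,V$ invariant under both $A$ and $A^*$. Split decomposition: $U_i=(E^*_0V+\cdots+E^*_iV)\cap(E_iV+\cdots+E_dV)$;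 known: $V=U_0\oplus\cdots\oplus U_d$, $(A-\theta_iI)U_i\subseteq U_{i+1}$, $(A^*-\theta^*_iI)U_i\subseteq U_{i-1}$ ($U_{-1}=U_{d+1}=0$). *)

(* Defs.v *)
From HB Require Import structures.
From mathcomp Require Import all_boot all_order all_algebra.
Set Implicit Arguments. Unset Strict Implicit. Unset Printing Implicit Defensive.
Import Order.TTheory GRing.Theory Num.Theory.
Local Open Scope ring_scope.

(* CONVENTION: V = 'rV[F]_n.+1 (a nonzero finite-dim space); a linear map X
   on V is a square matrix acting on the RIGHT of row vectors: v |-> v *m X.
   Hence the ring product X * Y (= X *m Y) of 'M_n.+1 represents the
   composition "first X, then Y", i.e. the paper's  Y X  (= Y o X).
   The image X V of a map X is the row space of X. *)

Definition qint3 (F : fieldType) (q : F) : F := q ^+ 2 + 1 + q ^- 2.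

(* q-Serre relations for (X,Y), transcribed to the row-vector convention:
   the paper's word X1 X2 ... Xk (composition) becomes Xk * ... * X1. *)
Definition qSerre (F : fieldType) (n : nat) (q : F) (X Y : 'M[F]_n.+1) : Prop :=
  Y * X ^+ 3 - qint3 q *: (X * Y * X ^+ 2) + qint3 q *: (X ^+ 2 * Y * X)
    - X ^+ 3 * Y = 0
  /\ X * Y ^+ 3 - qint3 q *: (Y * X * Y ^+ 2) + qint3 q *: (Y ^+ 2 * X * Y)
    - Y ^+ 3 * X = 0.

Definition prim_idem (F : fieldType) (n d : nat) (th : 'I_d.+1 -> F)
  (X : 'M[F]_n.+1) (i : 'I_d.+1) : 'M[F]_n.+1 :=
  \prod_(j < d.+1 | j != i) ((th i - th j)^-1 *: (X - (th j)%:M)).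

Definition idem_ordering (F : fieldType) (n d : nat) (X : 'M[F]_n.+1)
  (E : 'I_d.+1 -> 'M[F]_n.+1) : Prop :=
  exists th : 'I_d.+1 -> F,
    [/\ injective th,
        (forall a, eigenvalue X a <-> exists i, a = th i)
      & forall i, E i = prim_idem th X i].

Definition tridiagonal_system (F : fieldType) (n d : nat)
  (A : 'M[F]_n.+1) (E : 'I_d.+1 -> 'M[F]_n.+1)
  (As : 'M[F]_n.+1) (Es : 'I_d.+1 -> 'M[F]_n.+1) : Prop :=
  [/\ diagonalizable A, diagonalizable As,
      idem_ordering A E & idem_ordering As Es]
  /\ (forall i j : 'I_d.+1, (j.+1 < i)%N \/ (i.+1 < j)%N ->
          E i * As * E j = 0 /\ Es i * A * Es j = 0)
  /\ (forall W : 'M[F]_n.+1, stablemx W A -> stablemx W As ->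
          (W == (0 : 'M[F]_n.+1))%MS || row_full W).

Definition split_space (F : fieldType) (n d : nat)
  (E Es : 'I_d.+1 -> 'M[F]_n.+1) (i : 'I_d.+1) : 'M[F]_n.+1 :=
  ((\sum_(j < d.+1 | (j <= i)%N) Es j) :&: (\sum_(j < d.+1 | (i <= j)%N) E j))%MS.

(* Main.v *)
Require Import Defs.
From HB Require Import structures.
From mathcomp Require Import all_boot all_order all_algebra.
From mathcomp Require Import zify ring.
Import Order.TTheory GRing.Theory Num.Theory.
Local Open Scope ring_scope.
Set Implicit Arguments. Unset Strict Implicit. Unset Printing Implicit Defensive.

Lemma lagrange1 (F : fieldType) d (th : 'I_d.+1 -> F) : injective th ->
  \sum_(i < d.+1) \prod_(j < d.+1 | j != i)
      ((th i - th j)^-1 *: ('X - (th j)%:P)) = 1 :> {poly F}.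
Proof.
move=> thi; set p := \sum_(i < d.+1) _.
apply/eqP; rewrite -subr_eq0; apply/negPn/negP => nz.
have hs : (size (p - 1)%R <= d.+1)%N.
  apply: leq_trans (size_polyD _ _) _; rewrite geq_max size_polyN size_poly1 /= andbT.
  apply: leq_trans (size_sum _ _ _) _; apply/bigmax_leqP => i _.
  have nzF : forall j, j != i -> (th i - th j)^-1 *: ('X - (th j)%:P) != 0.
    move=> j ji; rewrite scaler_eq0 invr_eq0 subr_eq0 (inj_eq thi) eq_sym (negPf ji) /=.
    by rewrite polyXsubC_eq0.
  rewrite size_prod //.
  rewrite (eq_bigr (fun _ => 2%N)); last first.
    move=> j ji; rewrite size_scale ?size_XsubC //.
    by rewrite invr_eq0 subr_eq0 (inj_eq thi) eq_sym.
  rewrite sum_nat_const cardC1 card_ord /=. lia.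
have := max_poly_roots nz (rs := map th (enum 'I_d.+1)).
rewrite size_map size_enum_ord map_inj_uniq ?enum_uniq // ltnNge hs.
move=> H; suff Hall : all (root (p - 1)) [seq th i | i <- enum 'I_d.+1] by move: (H Hall isT).
apply/allP => x /mapP [k _ ->].
rewrite /root hornerD hornerN hornerC horner_sum (bigD1 k) //=.
rewrite [X in _ + X + _]big1 ?addr0.
  rewrite horner_prod (eq_bigr (fun _ => 1)) ?big1 ?subrr // => j jk.
  by rewrite hornerZ hornerXsubC mulVf // subr_eq0 (inj_eq thi) eq_sym.
move=> i ik; rewrite horner_prod (bigD1 k) 1?eq_sym //=.
by rewrite hornerZ hornerXsubC subrr mulr0 mul0r.
Qed.

Lemma lagrange_mx (F : fieldType) n d (th : 'I_d.+1 -> F) (X : 'M[F]_n.+1) :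
  injective th -> \sum_(i < d.+1) prim_idem th X i = 1.
Proof.
move=> thi; have := congr1 (horner_mx X) (lagrange1 thi).
rewrite rmorph1 rmorph_sum => <-; apply: eq_bigr => i _.
rewrite rmorph_prod; apply: eq_bigr => j _.
rewrite -[RHS]/(horner_mx X ((th i - th j)^-1 *: ('X - (th j)%:P))) horner_mxZ rmorphB /= horner_mx_X horner_mx_C.
by [].
Qed.

Lemma push (F : fieldType) n m (I : finType) (S S' : I -> 'M[F]_n.+1)
  (X : 'M[F]_n.+1) (P Q : pred I) (R : I -> I -> bool) :
  (forall j (w : 'M[F]_(m, n.+1)), P j -> (w <= S j)%MS ->
      (w *m X <= \sum_(k | R j k) S' k)%MS) ->
  (forall j k, P j -> R j k -> Q k) ->
  forall v : 'M[F]_(m, n.+1), (v <= \sum_(j | P j) S j)%MS ->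
    (v *m X <= \sum_(k | Q k) S' k)%MS.
Proof.
move=> h hq v /sub_sumsmxP [u ->]; rewrite mulmx_suml.
apply: summx_sub => j Pj; apply: submx_trans (h j _ Pj (submxMl _ _)) _.
by apply/sumsmx_subP => k Rk; apply: (sumsmx_sup k (hq _ _ Pj Rk)).
Qed.

Lemma tri_push (F : fieldType) n d (T : 'I_d.+1 -> 'M[F]_n.+1) (X : 'M[F]_n.+1) :
  \sum_k T k = 1 ->
  (forall j k : 'I_d.+1, (k.+1 < j)%N \/ (j.+1 < k)%N -> T j * X * T k = 0) ->
  forall j (v : 'rV[F]_n.+1), (v <= T j)%MS ->
    (v *m X <= \sum_(k : 'I_d.+1 | (j <= k.+1)%N && (k <= j.+1)%N) T k)%MS.
Proof.
move=> s1 tri j v /submxP [u ->].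
rewrite -[_ *m X]mulmx1 -[1%:M]/(1 : 'M[F]_n.+1) -s1 mulmx_sumr; apply: summx_sub; move=> k _.
case: (boolP ((j <= k.+1)%N && (k <= j.+1)%N)) => hk.
  exact: (sumsmx_sup k hk (submxMl _ _)).
rewrite -!mulmxA (mulmxA (T j)).
have -> : T j *m X *m T k = 0.
  apply: tri.
  move: hk; rewrite negb_and -!ltnNge => /orP [] ?; [left|right] => //.
by rewrite mulmx0 sub0mx.
Qed.

Lemma eig_sub (F : fieldType) n m (X : 'M[F]_n.+1) a b (w : 'M[F]_(m, n.+1)) :
  (w <= eigenspace X a)%MS -> w *m (X - b%:M) = (a - b) *: w.
Proof.
by move/eigenspaceP => h; rewrite mulmxBr h mul_mx_scalar scalerBl.
Qed.

Lemma L4 (F : fieldType) n (q th c : F) (A K : 'M[F]_n.+1) (w r : 'rV[F]_n.+1) :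
  q != 0 -> q ^+ 2 != 1 -> th * c = 1 -> w *m A = th *: w + r ->
  w *m K = c *: w -> r *m K = (c / q ^+ 2) *: r ->
  w *m ((q - q^-1)^-1 *: (q *: (A * K) - q^-1 *: (K * A))) = w.
Proof.
move=> q0 q2 thc hA hK hr.
have e1 : w *m (A * K) = (th * c) *: w + (c / q ^+ 2) *: r.
  by rewrite -mulmxE mulmxA hA mulmxDl -scalemxAl hK hr scalerA.
have e2 : w *m (K * A) = (c * th) *: w + c *: r.
  by rewrite -mulmxE mulmxA hK -scalemxAl hA scalerDr scalerA.
have qq : q - q^-1 != 0.
  apply: contra q2; rewrite subr_eq0 => /eqP h.
  by rewrite expr2 {1}h mulVf.
have key : q *: ((th * c) *: w + (c / q ^+ 2) *: r) - q^-1 *: ((c * th) *: w + c *: r)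
    = (q - q^-1) *: w.
  rewrite !scalerDr !scalerA opprD addrACA -!scalerBl.
  have -> : q * (th * c) - q^-1 * (c * th) = q - q^-1 by rewrite (mulrC c) thc !mulr1.
  have -> : q * (c / q ^+ 2) - q^-1 * c = 0 by field.
  by rewrite scale0r addr0.
rewrite -scalemxAr mulmxBr -!scalemxAr e1 e2 key.
by rewrite scalerA mulVf // scale1r.
Qed.

Lemma Kinv_gen (F : fieldType) n (K : 'M[F]_n.+1) (x : 'rV[F]_n.+1) a :
  K \in unitmx -> a != 0 -> x *m K = a *: x -> x *m K^-1 = a^-1 *: x.
Proof.
move=> Ku a0 hx.
rewrite {1}(_ : x = a^-1 *: (x *m K)); last by rewrite hx scalerA mulVf // scale1r.
by rewrite -scalemxAl mulmxK.
Qed.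

Theorem lemma7p1 (F : closedFieldType) (n d : nat) (q : F)
  (A As : 'M[F]_n.+1) (E Es : 'I_d.+1 -> 'M[F]_n.+1) (K : 'M[F]_n.+1) :
  q != 0 ->
  (forall k : nat, (0 < k)%N -> q ^+ k != 1) ->
  (1 <= d)%N ->
  tridiagonal_system A E As Es ->
  qSerre q A As ->
  (forall i : 'I_d.+1,
      (E i == eigenspace A (q ^ ((2 * i)%N%:Z - d%:Z)))%MS) ->
  (forall i : 'I_d.+1,
      (Es i == eigenspace As (q ^ (d%:Z - (2 * i)%N%:Z)))%MS) ->
  (forall (i : 'I_d.+1) (v : 'rV[F]_n.+1),
      (v <= split_space E Es i)%MS -> v *m K = q ^ (d%:Z - (2 * i)%N%:Z) *: v) ->
  (q - q^-1)^-1 *: (q *: (A * K) - q^-1 *: (K * A)) = 1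
  /\ (q - q^-1)^-1 *: (q *: (As * K^-1) - q^-1 *: (K^-1 * As)) = 1.
Proof.
move=> q0 qn1 d1 [[_ _ [th [thi thE Edef]] [ths [thsi thsE Esdef]]] [tri irr]] _ hE hEs hK.
have q2 : q ^+ 2 != 1 := qn1 2 isT.
have sE : \sum_i E i = 1.
  by under eq_bigr do rewrite Edef; exact: lagrange_mx.
have sEs : \sum_i Es i = 1.
  by under eq_bigr do rewrite Esdef; exact: lagrange_mx.
have thc : forall i : 'I_d.+1,
    q ^ ((2 * i)%N%:Z - d%:Z) * q ^ (d%:Z - (2 * i)%N%:Z) = 1.
  by move=> i; rewrite -expfzDr // addrA subrK subrr expr0z.
have cnz : forall i : 'I_d.+1, q ^ (d%:Z - (2 * i)%N%:Z) != 0.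
  by move=> i; rewrite expfz_neq0.
have cS : forall i : 'I_d.+1, (i < d)%N ->
    q ^ (d%:Z - (2 * (inord i.+1 : 'I_d.+1))%N%:Z) = q ^ (d%:Z - (2 * i)%N%:Z) / q ^+ 2.
  move=> i hi; rewrite inordK ?ltnS //.
  apply: (canRL (mulfK _)); first by rewrite expf_neq0.
  rewrite -[q ^+ 2]/(q ^ 2%:Z) -expfzDr //; congr (_ ^ _); lia.
have cP : forall i : 'I_d.+1, (0 < i)%N ->
    q ^ (d%:Z - (2 * (inord i.-1 : 'I_d.+1))%N%:Z) = q ^ (d%:Z - (2 * i)%N%:Z) * q ^+ 2.
  move=> i hi; rewrite inordK; last by have := ltn_ord i; lia.
  rewrite -[q ^+ 2]/(q ^ 2%:Z) -expfzDr //; congr (_ ^ _); lia.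
have F3a : forall (i : 'I_d.+1) (v : 'rV[F]_n.+1),
    (v <= \sum_(j : 'I_d.+1 | (j <= i)%N) Es j)%MS -> (v *m A <= \sum_(k : 'I_d.+1 | (k <= i.+1)%N) Es k)%MS.
  move=> i; apply: (push (R := fun j k : 'I_d.+1 => (j <= k.+1)%N && (k <= j.+1)%N)).
    move=> j w _ hw; exact: (tri_push sEs (fun j k h => (tri j k h).2) hw).
  by move=> j k /= hj /andP [_ hk]; rewrite (leq_trans hk) // ltnS.
have F3b : forall (i : 'I_d.+1) (v : 'rV[F]_n.+1),
    (v <= \sum_(j : 'I_d.+1 | (i <= j)%N) E j)%MS -> (v *m As <= \sum_(k : 'I_d.+1 | (i <= k.+1)%N) E k)%MS.
  move=> i; apply: (push (R := fun j k : 'I_d.+1 => (j <= k.+1)%N && (k <= j.+1)%N)).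
    move=> j w _ hw; exact: (tri_push sE (fun j k h => (tri j k h).1) hw).
  by move=> j k /= hj /andP [hk _]; rewrite (leq_trans hj).
have F4a : forall (i : 'I_d.+1) (v : 'rV[F]_n.+1),
    (v <= \sum_(j : 'I_d.+1 | (i <= j)%N) E j)%MS ->
    (v *m (A - (q ^ ((2 * i)%N%:Z - d%:Z))%:M) <= \sum_(k : 'I_d.+1 | (i < k)%N) E k)%MS.
  move=> i; apply: (push (R := fun j k : 'I_d.+1 => (k == j) && (j != i))).
    move=> j w _ hw.
    have hw' := hw; move/eqmxP: (hE j) => e; rewrite e in hw'.
    rewrite (eig_sub _ hw').
    case: (eqVneq j i) => [->|ji]; first by rewrite subrr scale0r sub0mx.
    by apply: scalemx_sub; apply: (sumsmx_sup j); rewrite ?eqxx ?ji //.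
  move=> j k /= hj /andP [/eqP -> ji]; rewrite ltn_neqAle hj andbT eq_sym; exact: ji.
have F4b : forall (i : 'I_d.+1) (v : 'rV[F]_n.+1),
    (v <= \sum_(j : 'I_d.+1 | (j <= i)%N) Es j)%MS ->
    (v *m (As - (q ^ (d%:Z - (2 * i)%N%:Z))%:M) <= \sum_(k : 'I_d.+1 | (k < i)%N) Es k)%MS.
  move=> i; apply: (push (R := fun j k : 'I_d.+1 => (k == j) && (j != i))).
    move=> j w _ hw.
    have hw' := hw; move/eqmxP: (hEs j) => e; rewrite e in hw'.
    rewrite (eig_sub _ hw').
    case: (eqVneq j i) => [->|ji]; first by rewrite subrr scale0r sub0mx.
    by apply: scalemx_sub; apply: (sumsmx_sup j); rewrite ?eqxx ?ji //.
  move=> j k /= hj /andP [/eqP -> ji]; rewrite ltn_neqAle hj andbT; exact: ji.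
pose W := (\sum_(i < d.+1) split_space E Es i)%MS.
have mono : forall (S : 'I_d.+1 -> 'M[F]_n.+1) (P Q : pred 'I_d.+1) (v : 'rV[F]_n.+1),
    (forall j, P j -> Q j) -> (v <= \sum_(j | P j) S j)%MS -> (v <= \sum_(j | Q j) S j)%MS.
  move=> S P Q v hPQ hv; apply: submx_trans hv _; apply/sumsmx_subP => j hj.
  exact: (sumsmx_sup j (hPQ _ hj) (submx_refl _)).
have rK : forall (i : 'I_d.+1) (v : 'rV[F]_n.+1), (v <= split_space E Es i)%MS ->
    let r := v *m (A - (q ^ ((2 * i)%N%:Z - d%:Z))%:M) in
    (r <= W)%MS /\ r *m K = (q ^ (d%:Z - (2 * i)%N%:Z) / q ^+ 2) *: r.
  move=> i v hv r; move: hv; rewrite /split_space sub_capmx => /andP [hv1 hv2].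
  have r1 : (r <= \sum_(k : 'I_d.+1 | (k <= i.+1)%N) Es k)%MS.
    rewrite /r mulmxBr mul_mx_scalar addmx_sub ?F3a //.
    rewrite -scaleNr scalemx_sub //; apply: mono hv1 => j /= hj; exact: leqW.
  have r2 := F4a i v hv2; rewrite -/r in r2.
  case: (ltnP i d) => hid.
    have hU : (r <= split_space E Es (inord i.+1))%MS.
      by rewrite /split_space sub_capmx inordK ?ltnS // r1 r2.
    split; first exact: (sumsmx_sup (inord i.+1) isT hU).
    by rewrite (hK _ _ hU) cS.
  have r0 : r = 0.
    apply/eqP; rewrite -submx0; move: r2; rewrite big_pred0 // => k.
    by apply/negbTE; rewrite -leqNgt; apply: leq_trans (leq_ord k) hid.
  by rewrite r0 sub0mx mul0mx scaler0.
have lK : forall (i : 'I_d.+1) (v : 'rV[F]_n.+1), (v <= split_space E Es i)%MS ->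
    let l := v *m (As - (q ^ (d%:Z - (2 * i)%N%:Z))%:M) in
    (l <= W)%MS /\ l *m K = (q ^ (d%:Z - (2 * i)%N%:Z) * q ^+ 2) *: l.
  move=> i v hv l; move: hv; rewrite /split_space sub_capmx => /andP [hv1 hv2].
  have l2 : (l <= \sum_(k : 'I_d.+1 | (i <= k.+1)%N) E k)%MS.
    rewrite /l mulmxBr mul_mx_scalar addmx_sub ?F3b //.
    rewrite -scaleNr scalemx_sub //; apply: mono hv2 => j /= hj; exact: leqW.
  have l1 := F4b i v hv1; rewrite -/l in l1.
  case: (posnP i) => hi0; last first.
    have hU : (l <= split_space E Es (inord i.-1))%MS.
      rewrite /split_space sub_capmx inordK; last by have := ltn_ord i; lia.
      apply/andP; split; [apply: mono l1 | apply: mono l2] => j /=; lia.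
    split; first exact: (sumsmx_sup (inord i.-1) isT hU).
    by rewrite (hK _ _ hU) cP.
  have l0 : l = 0.
    apply/eqP; rewrite -submx0; move: l1; rewrite big_pred0 // => k.
    by rewrite hi0.
  by rewrite l0 sub0mx mul0mx scaler0.
have stab : forall X : 'M[F]_n.+1,
    (forall (i : 'I_d.+1) (v : 'rV[F]_n.+1), (v <= split_space E Es i)%MS -> (v *m X <= W)%MS) ->
    (W *m X <= W)%MS.
  move=> X hX; apply: (push (P := predT) (Q := predT) (R := fun _ _ => true)).
  - move=> j w _ hw; apply/row_subP => r; rewrite row_mul.
    exact: hX j _ (submx_trans (row_sub r w) hw).
  - by [].
  - exact: submx_refl.
have stA : (W *m A <= W)%MS.
  apply: stab => i v hv.
  have -> : v *m A = v *m (A - (q ^ ((2 * i)%N%:Z - d%:Z))%:M)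
      + q ^ ((2 * i)%N%:Z - d%:Z) *: v by rewrite mulmxBr mul_mx_scalar subrK.
  by rewrite addmx_sub ?(rK i v hv).1 // scalemx_sub // (sumsmx_sup i).
have stAs : (W *m As <= W)%MS.
  apply: stab => i v hv.
  have -> : v *m As = v *m (As - (q ^ (d%:Z - (2 * i)%N%:Z))%:M)
      + q ^ (d%:Z - (2 * i)%N%:Z) *: v by rewrite mulmxBr mul_mx_scalar subrK.
  by rewrite addmx_sub ?(lK i v hv).1 // scalemx_sub // (sumsmx_sup i).
have [v0 hv0 v0nz] : exists2 v : 'rV[F]_n.+1, (v <= W)%MS & v != 0.
  have := (thE (th ord_max)).2 (ex_intro _ ord_max erefl).
  case/eigenvalueP => v hv vnz; exists v => //.
  have vE : v *m E ord_max = v.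
    rewrite Edef /prim_idem.
    apply: (big_ind (fun M => v *m M = v)) => [|M1 M2 h1 h2|j jd].
    - exact: mulmx1.
    - by rewrite -[M1 * M2]/(M1 *m M2) mulmxA h1 h2.
    - rewrite -scalemxAr mulmxBr hv mul_mx_scalar -scalerBl scalerA mulVf ?scale1r //.
      by rewrite subr_eq0 (inj_eq thi) eq_sym.
  apply: (sumsmx_sup ord_max) => //.
  rewrite /split_space sub_capmx; apply/andP; split.
    rewrite -[v]mulmx1 -[1%:M]/(1 : 'M[F]_n.+1) -sEs mulmx_sumr; apply: summx_sub => j _.
    exact: (sumsmx_sup j (leq_ord j) (submxMl _ _)).
  by apply: (sumsmx_sup ord_max (leqnn _)); rewrite -vE submxMl.
have allW : forall v : 'rV[F]_n.+1, (v <= W)%MS.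
  case/orP: (irr W stA stAs) => [/andP [W0 _]|Wf v]; last exact: submx_full.
  by move: v0nz; rewrite -submx0 (submx_trans hv0 W0).
have dec : forall (M : 'M[F]_n.+1),
    (forall (i : 'I_d.+1) (w : 'rV[F]_n.+1), (w <= split_space E Es i)%MS -> w *m M = w) ->
    M = 1.
  move=> M hM; apply/row_matrixP => r.
  rewrite -[M]mul1mx row_mul -[1%:M]/(1 : 'M[F]_n.+1).
  case/sub_sumsmxP: (allW (row r 1)) => u ->.
  rewrite mulmx_suml; apply: eq_bigr => i _; apply: hM; exact: submxMl.
have Ku : K \in unitmx.
  rewrite -row_full_unit -sub1mx; apply/row_subP => r.
  case/sub_sumsmxP: (allW (row r 1%:M)) => u ->.
  apply: summx_sub => i _.
  have hw : (u i *m split_space E Es i <= split_space E Es i)%MS by exact: submxMl.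
  rewrite (_ : u i *m _ = (q ^ (d%:Z - (2 * i)%N%:Z))^-1 *: (u i *m split_space E Es i *m K)).
    by apply: scalemx_sub; exact: submxMl.
  by rewrite (hK _ _ hw) scalerA mulVf // scale1r.
split; apply: dec => i w hw.
  apply: (L4 (th := q ^ ((2 * i)%N%:Z - d%:Z)) (c := q ^ (d%:Z - (2 * i)%N%:Z))
    (r := w *m (A - (q ^ ((2 * i)%N%:Z - d%:Z))%:M))) => //.
  - by rewrite mulmxBr mul_mx_scalar addrC subrK.
  - exact: hK.
  - exact: (rK i w hw).2.
apply: (L4 (th := q ^ (d%:Z - (2 * i)%N%:Z)) (c := (q ^ (d%:Z - (2 * i)%N%:Z))^-1)
    (r := w *m (As - (q ^ (d%:Z - (2 * i)%N%:Z))%:M))) => //.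
- by rewrite mulfV.
- by rewrite mulmxBr mul_mx_scalar addrC subrK.
- by apply: Kinv_gen => //; exact: hK.
- rewrite (Kinv_gen Ku _ (lK i w hw).2) ?mulf_neq0 ?expf_neq0 //.
  by rewrite invfM.
Qed.
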